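(* Let $\nu>-1$. Then there exist constants $C,c>0$ such that $$|\delta\, p_t^\nu(x,y)|\le \frac{C}{t}\exp\Big(-\frac{|x-y|^2}{ct}\Big)\Big(1+\frac{\sqrt t}{y}\Big)^{\gamma_\nu}$$ for all $t>0$ and $x,y\in(0,\infty)$, where $\delta=\partial_x+x-\frac1x(\nu+\frac12)$ acts in the variable $x$.
   Context: For $\nu>-1$, $p_t^\nu(x,y)$ is the integral kernel of $e^{-t\mathcal L_\nu}$, where $\mathcal L_\nu$ is the one-dimensional Laguerre operator on $(0,\infty)$ (eigenfunctions the Laguerre functions $\varphi_k^\nu$, eigenvalues $4k+2\nu+2$); explicitly, with $r=e^{-4t}$, $p_t^\nu(x,y)=\frac{2(rxy)^{1/2}}{1-r}\exp\big(-\frac12\frac{1+r}{1-r}(x^2+y^2)\big)I_\nu\big(\frac{2r^{1/2}}{1-r}xy\big)$, $I_\nu$ the modified Bessel function of the first kind. $\gamma_\nu=-1/2-\nu$ if $-1<\nu<-1/2$ and $\gamma_\nu=0$ if $\nu\ge-1/2$. *)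

(* Defs.v *)
From Stdlib Require Import Reals.
From Coquelicot Require Import Coquelicot.
Open Scope R_scope.

Definition Gamma (s : R) : R :=
  RInt_gen (fun u => Rpower u (s - 1) * exp (- u)) (at_right 0) (Rbar_locally p_infty).

Definition BesselI (nu z : R) : R :=
  Series (fun k : nat =>
    Rpower (z / 2) (2 * INR k + nu) / (INR (Factorial.fact k) * Gamma (INR k + nu + 1))).

Definition lag_kernel (nu t x y : R) : R :=
  let r := exp (- (4 * t)) in
  2 * sqrt (r * x * y) / (1 - r)
    * exp (- (1 / 2) * ((1 + r) / (1 - r)) * (x ^ 2 + y ^ 2))
    * BesselI nu (2 * sqrt r / (1 - r) * x * y).

Definition gamma_nu (nu : R) : R :=
  if Rlt_dec nu (- (1 / 2)) then - (1 / 2) - nu else 0.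

Definition delta_kernel (nu t x y : R) : R :=
  Derive (fun x' => lag_kernel nu t x' y) x
  + x * lag_kernel nu t x y
  - (1 / x) * (nu + 1 / 2) * lag_kernel nu t x y.

(* Main.v *)
Require Import Defs.
From Stdlib Require Import Reals.
From Coquelicot Require Import Coquelicot.
From Stdlib Require Import Psatz Lra Classical.
Open Scope R_scope.

Lemma ln_le_sub1 x : 0 < x -> ln x <= x - 1.
Proof. intros Hx. pose proof (exp_ineq1_le (ln x)). rewrite exp_ln in H; lra. Qed.

Lemma mono_lim_pinfty (G : R -> R) (B : R) :
  (forall u v, 1 <= u -> u <= v -> G u <= G v) ->
  (forall u, 1 <= u -> G u <= B) ->
  exists l, filterlim G (Rbar_locally p_infty) (locally l) /\ (forall u, 1 <= u -> G u <= l).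
Proof.
  intros Hm Hb.
  set (E := fun y => exists u, 1 <= u /\ y = G u).
  assert (HE : bound E). { exists B. intros y [u [Hu ->]]. now apply Hb. }
  assert (HE2 : exists y, E y). { exists (G 1). exists 1. split; [lra|easy]. }
  destruct (completeness E HE HE2) as [l [Hl1 Hl2]].
  exists l. split; [|intros u Hu; apply Hl1; exists u; split; [lra|easy]].
  apply filterlim_locally. intros eps.
  assert (exists u0, 1 <= u0 /\ l - eps < G u0) as [u0 [Hu0 Hg]].
  { apply Classical_Pred_Type.not_all_not_ex. intros Hn.
    assert (l <= l - eps). { apply Hl2. intros y [u [Hu ->]].
      specialize (Hn u). apply Rnot_lt_le. intros Hc. apply Hn. split; auto. }
    pose proof (cond_pos eps). lra. }
  exists u0. intros x Hx.
  assert (G x <= l). { apply Hl1. exists x. split; [lra|easy]. }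
  assert (G u0 <= G x) by (apply Hm; lra).
  change (Rabs (G x - l) < eps). apply Rabs_lt_between'. lra.
Qed.

Lemma mono_lim_right0 (G : R -> R) (B : R) :
  (forall u v, 0 < u -> u <= v -> v <= 1 -> G u <= G v) ->
  (forall u, 0 < u -> u <= 1 -> - B <= G u) ->
  exists l, filterlim G (at_right 0) (locally l) /\ (forall u, 0 < u -> u <= 1 -> l <= G u).
Proof.
  intros Hm Hb.
  set (E := fun y => exists u, 0 < u /\ u <= 1 /\ y = - G u).
  assert (HE : bound E). { exists B. intros y [u [Hu [Hu' ->]]]. specialize (Hb u Hu Hu'). lra. }
  assert (HE2 : exists y, E y). { exists (- G 1). exists 1. split; [lra|split;[lra|easy]]. }
  destruct (completeness E HE HE2) as [m [Hl1 Hl2]].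
  exists (- m). split; [|intros u Hu Hu'; assert (- G u <= m) by (apply Hl1; exists u; split; [lra|split;[lra|easy]]); lra].
  apply filterlim_locally. intros eps.
  assert (exists u0, 0 < u0 /\ u0 <= 1 /\ m - eps < - G u0) as [u0 [Hu0 [Hu0' Hg]]].
  { apply Classical_Pred_Type.not_all_not_ex. intros Hn.
    assert (m <= m - eps). { apply Hl2. intros y [u [Hu [Hu' ->]]].
      specialize (Hn u). apply Rnot_lt_le. intros Hc. apply Hn. split; auto. }
    pose proof (cond_pos eps). lra. }
  exists (mkposreal u0 Hu0). intros x Hx Hx0. simpl in Hx.
  change (Rabs (x - 0) < u0) in Hx. rewrite Rminus_0_r in Hx.
  apply Rabs_lt_between in Hx.
  assert (- G x <= m). { apply Hl1. exists x. split; [lra|split;[lra|easy]]. }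
  assert (G x <= G u0) by (apply Hm; lra).
  change (Rabs (G x - - m) < eps). apply Rabs_lt_between'. lra.
Qed.


Definition gf (s u : R) := Rpower u (s - 1) * exp (- u).

Lemma gf_cont s u : 0 < u -> continuous (gf s) u.
Proof. intros Hu. apply (ex_derive_continuous (V := R_NormedModule)). unfold gf, Rpower. auto_derive. lra. Qed.

Lemma gf_pos s u : 0 < u -> 0 < gf s u.
Proof. intros. unfold gf, Rpower. apply Rmult_lt_0_compat; apply exp_pos. Qed.

Lemma gf_ex s a b : 0 < a -> 0 < b -> ex_RInt (gf s) a b.
Proof. intros Ha Hb. apply (ex_RInt_continuous (V:=R_CompleteNormedModule)). intros z Hz. apply gf_cont.
  destruct Hz as [Hz _]. eapply Rlt_le_trans; [|apply Hz]. unfold Rmin; destruct Rle_dec; lra. Qed.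

Definition GF s u := RInt (gf s) 1 u.

Lemma GF_der s u : 0 < u -> is_derive (GF s) u (gf s u).
Proof. intros Hu. apply (is_derive_RInt (V:=R_CompleteNormedModule) (gf s) (GF s) 1 u).
  - exists (mkposreal u Hu). intros v Hv. apply RInt_correct. apply gf_ex. lra.
    change (Rabs (v - u) < u) in Hv. apply Rabs_lt_between in Hv. lra.
  - now apply gf_cont. Qed.

Lemma GF_mono s u v : 0 < u -> u <= v -> GF s u <= GF s v.
Proof. intros Hu Huv. unfold GF.
  rewrite <- (RInt_Chasles (gf s) 1 u v) by (apply gf_ex; lra).
  assert (0 <= RInt (gf s) u v). { apply RInt_ge_0; auto. apply gf_ex; lra.
    intros x Hx. apply Rlt_le, gf_pos; lra. }
  simpl. unfold plus; simpl. lra. Qed.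

Lemma exp_mono a b : a <= b -> exp a <= exp b.
Proof. intros [H|H]. apply Rlt_le, exp_increasing, H. subst; lra. Qed.

Lemma ln_le_2sqrt x : 0 < x -> ln x <= 2 * sqrt x.
Proof. intros Hx. assert (Hs : 0 < sqrt x) by (apply sqrt_lt_R0; lra).
  replace x with (sqrt x * sqrt x) at 1 by (apply sqrt_sqrt; lra).
  rewrite ln_mult by lra. pose proof (ln_le_sub1 _ Hs). lra. Qed.

Lemma gf_le_exp s x : 1 <= x -> gf s x <= exp (2 * (s-1)^2) * exp (- x / 2).
Proof. intros Hx. unfold gf, Rpower. rewrite <- exp_plus, <- exp_plus. apply exp_mono.
  assert (Hl : 0 <= ln x) by (rewrite <- ln_1; apply ln_le; lra).
  pose proof (ln_le_2sqrt x ltac:(lra)).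
  assert (Hs : sqrt x * sqrt x = x) by (apply sqrt_sqrt; lra).
  assert (0 <= sqrt x) by apply sqrt_pos.
  assert ((s - 1) * ln x <= Rabs (s-1) * (2 * sqrt x)).
  { apply Rle_trans with (Rabs (s-1) * ln x). apply Rmult_le_compat_r; [lra|apply Rle_abs].
    apply Rmult_le_compat_l; [apply Rabs_pos|lra]. }
  assert (Rabs (s-1) * (2 * sqrt x) <= x/2 + 2 * (s-1)^2).
  { assert (Hsq : (s-1)^2 = Rabs (s-1) * Rabs (s-1)).
    { rewrite <- Rabs_mult. rewrite Rabs_right. ring. apply Rle_ge, Rle_0_sqr. }
    rewrite Hsq. pose proof (pow2_ge_0 (sqrt x - 2 * Rabs (s-1))). nra. }
  lra. Qed.

Lemma GF_upper s u : 1 <= u -> GF s u <= 2 * exp (2 * (s-1)^2).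
Proof. intros Hu. set (K := exp (2 * (s-1)^2)).
  assert (HK : 0 < K) by apply exp_pos.
  assert (Hi : is_RInt (fun x => K * exp (- x / 2)) 1 u (minus ((fun x => - 2 * K * exp (- x / 2)) u) ((fun x => - 2 * K * exp (- x / 2)) 1))).
  { apply (is_RInt_derive (V:=R_CompleteNormedModule) (fun x => - 2 * K * exp (- x / 2)) (fun x => K * exp (- x / 2))).
    - intros x _. auto_derive. auto. unfold Rdiv. field.
    - intros x _. apply (ex_derive_continuous (V := R_NormedModule)). auto_derive. auto. }
  unfold GF. apply Rle_trans with (RInt (fun x => K * exp (- x / 2)) 1 u).
  - apply RInt_le; auto. apply gf_ex; lra. eexists; apply Hi.
    intros x Hx. apply gf_le_exp; lra.
  - rewrite (is_RInt_unique _ _ _ _ Hi). simpl. unfold minus, plus, opp; simpl.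
    pose proof (exp_pos (-u/2)). pose proof (exp_pos (-1/2)).
    assert (exp (-1/2) <= 1) by (rewrite <- exp_0; apply exp_mono; lra). replace (- (1) / 2) with (-1/2) by field. nra. Qed.

Lemma GF_lower s u : 0 < s -> 0 < u -> u <= 1 -> - / s <= GF s u.
Proof. intros Hs Hu Hu1. unfold GF.
  assert (Hi : is_RInt (fun x => exp ((s-1) * ln x)) u 1 (minus ((fun x => exp (s * ln x) / s) 1) ((fun x => exp (s * ln x) / s) u))).
  { apply (is_RInt_derive (V:=R_CompleteNormedModule) (fun x => exp (s * ln x) / s) (fun x => exp ((s-1) * ln x))).
    - intros x Hx. rewrite Rmin_left in Hx by lra. auto_derive. lra.
      replace ((s-1) * ln x) with (s * ln x + - ln x) by ring. rewrite exp_plus, exp_Ropp, exp_ln by lra.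
      field. lra.
    - intros x Hx. rewrite Rmin_left in Hx by lra.
      apply (ex_derive_continuous (V := R_NormedModule)). auto_derive. lra. }
  rewrite <- (opp_RInt_swap (V:=R_CompleteNormedModule)) by (apply gf_ex; lra).
  assert (RInt (gf s) u 1 <= RInt (fun x => exp ((s-1) * ln x)) u 1).
  { apply RInt_le; auto. apply gf_ex; lra. eexists; apply Hi.
    intros x Hx. unfold gf, Rpower. rewrite <- (Rmult_1_r (exp _)) at 2.
    apply Rmult_le_compat_l. apply Rlt_le, exp_pos. rewrite <- exp_0; apply exp_mono; lra. }
  rewrite (is_RInt_unique _ _ _ _ Hi) in H. simpl in H. unfold minus, plus, opp in H; simpl in H.
  rewrite ln_1, Rmult_0_r, exp_0 in H. pose proof (exp_pos (s * ln u)).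
  unfold opp; simpl. assert (exp (s * ln u) / s >= 0). { apply Rle_ge. apply Rdiv_le_0_compat; lra. }
  assert (/ s = 1 / s) by (field; lra). lra. Qed.

Lemma fp_pos : filter_prod (at_right 0) (Rbar_locally p_infty) (fun ab => 0 < fst ab /\ 0 < snd ab).
Proof. apply (Filter_prod _ _ _ (fun a => 0 < a) (fun b => 0 < b)).
  - exists (mkposreal 1 Rlt_0_1). intros y _ Hy. exact Hy.
  - exists 0. intros x Hx; exact Hx.
  - intros x y Hx Hy. simpl. auto. Qed.

Lemma fp_imp (P Q : R * R -> Prop) : (forall ab, P ab -> Q ab) ->
  filter_prod (at_right 0) (Rbar_locally p_infty) P ->
  filter_prod (at_right 0) (Rbar_locally p_infty) Q.
Proof. intros H HP. eapply filter_imp; [apply H|exact HP]. Qed.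

Lemma minmax_pos a b x : 0 < a -> 0 < b -> Rmin a b <= x <= Rmax a b -> 0 < x.
Proof. intros Ha Hb [H1 _]. unfold Rmin in H1; destruct Rle_dec; lra. Qed.

Lemma is_RInt_gen_Der (h dh : R -> R) la lb :
  (forall x, 0 < x -> is_derive h x (dh x)) ->
  (forall x, 0 < x -> continuous dh x) ->
  filterlim h (at_right 0) (locally la) ->
  filterlim h (Rbar_locally p_infty) (locally lb) ->
  is_RInt_gen dh (at_right 0) (Rbar_locally p_infty) (lb - la).
Proof. intros Hd Hc Ha Hb.
  assert (HD : forall x, 0 < x -> Derive h x = dh x) by (intros; apply is_derive_unique; auto).
  apply (is_RInt_gen_ext (Derive h)).
  - eapply fp_imp; [|apply fp_pos]. intros [a b] [Ha' Hb'] x Hx. simpl in *.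
    apply HD. eapply minmax_pos; [apply Ha'|apply Hb'|split; apply Rlt_le; apply Hx].
  - apply is_RInt_gen_Derive; auto.
    + eapply fp_imp; [|apply fp_pos]. intros [a b] [Ha' Hb'] x Hx. simpl in *.
      eexists; apply Hd. apply (minmax_pos a b x Ha' Hb' Hx).
    + eapply fp_imp; [|apply fp_pos]. intros [a b] [Ha' Hb'] x Hx. simpl in *.
      assert (Hx0 : 0 < x) by apply (minmax_pos a b x Ha' Hb' Hx).
      apply (continuous_ext_loc (Derive h) dh).
      * exists (mkposreal x Hx0). intros y Hy. change (Rabs (y - x) < x) in Hy.
        apply Rabs_lt_between in Hy. symmetry. apply HD. lra.
      * apply Hc, Hx0.
Qed.

Lemma Gamma_spec s : 0 < s -> exists l, is_RInt_gen (gf s) (at_right 0) (Rbar_locally p_infty) l /\ 0 < l.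
Proof. intros Hs.
  destruct (mono_lim_pinfty (GF s) (2 * exp (2 * (s-1)^2))) as [lb [Hlb Hlb']].
  { intros u v Hu Huv. apply GF_mono; lra. }
  { apply GF_upper. }
  destruct (mono_lim_right0 (GF s) (/ s)) as [la [Hla Hla']].
  { intros u v Hu Huv _. apply GF_mono; lra. }
  { intros u Hu Hu1. apply GF_lower; auto. }
  exists (lb - la). split.
  - apply (is_RInt_gen_Der (GF s) (gf s)); auto. apply GF_der. apply gf_cont.
  - assert (la <= GF s 1) by (apply Hla'; lra).
    assert (GF s 2 <= lb) by (apply Hlb'; lra).
    assert (GF s 1 = 0) by (unfold GF; apply (RInt_point (V:=R_CompleteNormedModule))).
    assert (0 < GF s 2). { unfold GF. apply RInt_gt_0. lra. intros x Hx; apply gf_pos; lra.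
      intros x Hx; apply gf_cont; lra. }
    lra.
Qed.

Lemma Gamma_eq s l : is_RInt_gen (gf s) (at_right 0) (Rbar_locally p_infty) l -> Gamma s = l.
Proof. intros H. unfold Gamma. apply (is_RInt_gen_unique (V:=R_CompleteNormedModule) (gf s)). exact H. Qed.

Lemma Gamma_pos s : 0 < s -> 0 < Gamma s.
Proof. intros Hs. destruct (Gamma_spec s Hs) as [l [H1 H2]]. rewrite (Gamma_eq _ _ H1). exact H2. Qed.

Lemma hlim0 s : 0 < s -> filterlim (fun u => - exp (s * ln u) * exp (- u)) (at_right 0) (locally 0).
Proof. intros Hs. apply filterlim_locally. intros eps.
  pose proof (cond_pos eps) as He.
  assert (Hd : 0 < exp (ln eps / s)) by apply exp_pos.
  exists (mkposreal _ Hd). intros u Hu Hu0. simpl in Hu.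
  change (Rabs (u - 0) < exp (ln eps / s)) in Hu. rewrite Rminus_0_r, Rabs_right in Hu by lra.
  change (Rabs (- exp (s * ln u) * exp (- u) - 0) < eps).
  rewrite Rminus_0_r, Rabs_mult, Rabs_Ropp, !Rabs_right by (apply Rle_ge, Rlt_le, exp_pos).
  assert (ln u < ln eps / s). { rewrite <- (ln_exp (ln eps / s)). apply ln_increasing; lra. }
  assert (s * ln u < ln eps). { apply (Rmult_lt_compat_l s) in H; auto. field_simplify in H; lra. }
  assert (exp (s * ln u) < eps). { rewrite <- (exp_ln eps) by lra. apply exp_increasing; lra. }
  assert (exp (- u) <= 1) by (rewrite <- exp_0; apply exp_mono; lra).
  pose proof (exp_pos (s * ln u)). pose proof (exp_pos (- u)). nra. Qed.

Lemma hliminf s : 0 < s -> filterlim (fun u => - exp (s * ln u) * exp (- u)) (Rbar_locally p_infty) (locally 0).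
Proof. intros Hs. apply filterlim_locally. intros eps.
  pose proof (cond_pos eps) as He.
  exists (Rmax 1 (2 * (2 * s^2 - ln eps))). intros u Hu.
  assert (Hu1 : 1 < u) by (eapply Rle_lt_trans; [apply Rmax_l|exact Hu]).
  assert (Hu2 : 2 * (2 * s^2 - ln eps) < u) by (eapply Rle_lt_trans; [apply Rmax_r|exact Hu]).
  change (Rabs (- exp (s * ln u) * exp (- u) - 0) < eps).
  rewrite Rminus_0_r, Rabs_mult, Rabs_Ropp, !Rabs_right by (apply Rle_ge, Rlt_le, exp_pos).
  rewrite <- exp_plus. rewrite <- (exp_ln eps) by lra. apply exp_increasing.
  pose proof (ln_le_2sqrt u ltac:(lra)).
  assert (Hsq : sqrt u * sqrt u = u) by (apply sqrt_sqrt; lra).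
  pose proof (sqrt_pos u).
  assert (s * ln u <= s * (2 * sqrt u)) by (apply Rmult_le_compat_l; lra).
  pose proof (pow2_ge_0 (sqrt u - 2 * s)). nra. Qed.

Lemma Gamma_rec s : 0 < s -> Gamma (s + 1) = s * Gamma s.
Proof. intros Hs. destruct (Gamma_spec s Hs) as [l [Hl _]].
  rewrite (Gamma_eq _ _ Hl).
  set (h := fun u => - exp (s * ln u) * exp (- u)).
  set (dh := fun u => gf (s+1) u - s * gf s u).
  assert (Hd : is_RInt_gen dh (at_right 0) (Rbar_locally p_infty) (0 - 0)).
  { apply (is_RInt_gen_Der h dh).
    - intros x Hx. unfold h, dh, gf, Rpower. auto_derive. lra.
      replace (s + 1 - 1) with s by ring.
      replace ((s - 1) * ln x) with (s * ln x + - ln x) by ring. rewrite exp_plus, (exp_Ropp (ln x)), exp_ln by lra.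
      field. lra.
    - intros x Hx. unfold dh, gf, Rpower. apply (ex_derive_continuous (V := R_NormedModule)). auto_derive. lra.
    - apply hlim0; auto.
    - apply hliminf; auto. }
  assert (Hsum := is_RInt_gen_plus _ _ _ _ (is_RInt_gen_scal _ s _ Hl) Hd).
  replace (s * l) with (plus (scal s l) (0 - 0)) by (unfold plus, scal; simpl; unfold mult; simpl; ring).
  apply Gamma_eq. eapply is_RInt_gen_ext; [|apply Hsum].
  apply filter_forall. intros [a b] x _. unfold dh, plus, scal; simpl. unfold mult; simpl. ring.
Qed.


Definition cf (mu : R) (k : nat) : R := / (INR (Factorial.fact k) * Gamma (INR k + mu + 1)).

Lemma fact_pos k : 0 < INR (Factorial.fact k).
Proof. apply lt_0_INR. apply Factorial.lt_O_fact. Qed.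

Lemma Gk_pos mu k : -1 < mu -> 0 < Gamma (INR k + mu + 1).
Proof. intros. apply Gamma_pos. pose proof (pos_INR k). lra. Qed.

Lemma cf_pos mu k : -1 < mu -> 0 < cf mu k.
Proof. intros. unfold cf. apply Rinv_0_lt_compat, Rmult_lt_0_compat. apply fact_pos. now apply Gk_pos. Qed.

Lemma Gk_S mu k : -1 < mu -> Gamma (INR (S k) + mu + 1) = (INR k + mu + 1) * Gamma (INR k + mu + 1).
Proof. intros. rewrite S_INR. replace (INR k + 1 + mu + 1) with ((INR k + mu + 1) + 1) by ring.
  apply Gamma_rec. pose proof (pos_INR k). lra. Qed.

Lemma cf_S mu k : -1 < mu -> cf mu (S k) = cf mu k / ((INR k + 1) * (INR k + mu + 1)).
Proof. intros H. unfold cf. rewrite Gk_S by auto. simpl Factorial.fact.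
  change (Factorial.fact k + k * Factorial.fact k)%nat with (S k * Factorial.fact k)%nat. rewrite mult_INR, S_INR. pose proof (fact_pos k). pose proof (Gk_pos mu k H). pose proof (pos_INR k).
  field. repeat split; lra. Qed.

Lemma cf_radius mu : -1 < mu -> CV_radius (cf mu) = p_infty.
Proof. intros H. apply CV_radius_infinite_DAlembert.
  - intros n. apply Rgt_not_eq, cf_pos, H.
  - apply is_lim_seq_le_le with (u := fun _ => 0) (w := fun n => / (mu + 1) * / INR (S n)).
    + intros n. rewrite cf_S by auto. pose proof (cf_pos mu n H). pose proof (pos_INR n).
      replace (cf mu n / ((INR n + 1) * (INR n + mu + 1)) / cf mu n) with (/ ((INR n + 1) * (INR n + mu + 1))) by (field; repeat split; lra).
      rewrite Rabs_right. split. apply Rlt_le, Rinv_0_lt_compat. apply Rmult_lt_0_compat; lra.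
      rewrite S_INR, <- Rinv_mult. apply Rinv_le_contravar. apply Rmult_lt_0_compat; lra.
      rewrite Rmult_comm. apply Rmult_le_compat_l; lra.
      apply Rle_ge, Rlt_le, Rinv_0_lt_compat. apply Rmult_lt_0_compat; lra.
    + apply is_lim_seq_const.
    + replace (Finite 0) with (Rbar_mult (/ (mu + 1)) 0) by (simpl; f_equal; ring).
      apply is_lim_seq_scal_l. 
      replace (Finite 0) with (Rbar_inv p_infty) by reflexivity.
      apply is_lim_seq_inv. apply (is_lim_seq_incr_1 INR). apply is_lim_seq_INR. discriminate.
Qed.

Definition Sb (mu z : R) : R := PSeries (cf mu) ((z / 2) ^ 2).

Lemma Sb_ex mu q : -1 < mu -> ex_pseries (cf mu) q.
Proof. intros H. apply CV_radius_inside. rewrite cf_radius by auto. simpl; auto. Qed.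

Lemma BesselI_Sb nu z : 0 < z -> BesselI nu z = Rpower (z/2) nu * Sb nu z.
Proof. intros Hz. unfold BesselI, Sb, PSeries. rewrite <- Series_scal_l. apply Series_ext. intros k.
  unfold cf. rewrite (Rplus_comm (2 * INR k) nu), Rpower_plus.
  replace (2 * INR k) with (INR (2 * k)) by (rewrite mult_INR; simpl; ring).
  rewrite Rpower_pow by lra. rewrite pow_mult. unfold Rdiv. ring. Qed.

Lemma PS_derive_cf mu k : -1 < mu -> PS_derive (cf mu) k = cf (mu + 1) k.
Proof. intros H. unfold PS_derive, cf. simpl Factorial.fact.
  change (Factorial.fact k + k * Factorial.fact k)%nat with (S k * Factorial.fact k)%nat.
  rewrite mult_INR. replace (INR (S k) + mu + 1) with (INR k + (mu + 1) + 1) by (rewrite S_INR; ring).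
  pose proof (fact_pos k). assert (0 < Gamma (INR k + (mu + 1) + 1)) by (apply Gk_pos; lra).
  pose proof (pos_INR k). rewrite S_INR. field. repeat split; lra. Qed.

Lemma Sb_der mu z : -1 < mu -> is_derive (Sb mu) z (z / 2 * Sb (mu + 1) z).
Proof. intros H. unfold Sb.
  assert (Hd : is_derive (PSeries (cf mu)) ((z/2)^2) (PSeries (cf (mu+1)) ((z/2)^2))).
  { rewrite <- (PSeries_ext (PS_derive (cf mu))) by (intros; apply PS_derive_cf; auto).
    apply is_derive_PSeries. rewrite cf_radius by auto. simpl; auto. }
  assert (Hq : is_derive (fun z => (z/2)^2) z (z/2)) by (auto_derive; auto; field).
  pose proof (is_derive_comp _ _ _ _ _ Hd Hq) as Hc. exact Hc. Qed.

Lemma Sb_rec mu z : -1 < mu -> Sb mu z = (mu + 1) * Sb (mu + 1) z + (z/2)^2 * Sb (mu + 2) z.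
Proof. intros H. unfold Sb. set (q := (z/2)^2).
  rewrite <- PSeries_scal, <- PSeries_incr_1. rewrite <- PSeries_plus.
  3: { apply ex_pseries_incr_1. apply Sb_ex; lra. }
  2: { apply ex_pseries_scal. apply Rmult_comm. apply Sb_ex; lra. } 
  apply PSeries_ext. intros [|j]; unfold PS_plus, PS_scal, PS_incr_1; simpl.
  - unfold cf. simpl. replace (0 + (mu+1) + 1) with ((0 + mu + 1) + 1) by ring.
    rewrite (Gamma_rec (0 + mu + 1)) by lra. assert (0 < Gamma (0 + mu + 1)) by (apply Gamma_pos; lra).
    unfold plus, zero, scal; simpl. unfold mult; simpl. field. lra.
  - unfold plus, scal; simpl. unfold mult; simpl.
    rewrite cf_S by lra. rewrite (cf_S (mu+1)) by lra.
    unfold cf. replace (INR j + (mu + 2) + 1) with ((INR j + (mu + 1) + 1) + 1) by ring.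
    rewrite (Gamma_rec (INR j + (mu + 1) + 1)) by (pose proof (pos_INR j); lra).
    replace (INR j + (mu + 1) + 1) with ((INR j + mu + 1) + 1) by ring.
    rewrite (Gamma_rec (INR j + mu + 1)) by (pose proof (pos_INR j); lra).
    pose proof (fact_pos j). pose proof (pos_INR j). assert (0 < Gamma (INR j + mu + 1)) by (apply Gk_pos; lra).
    field. repeat split; lra.
Qed.

Lemma cont_of_der (f : R -> R) x l : is_derive f x l -> continuity_pt f x.
Proof. intros H. apply continuity_pt_filterlim. apply (ex_derive_continuous (V := R_NormedModule)). eexists; exact H. Qed.

Lemma incr_of_der (f df : R -> R) a b : a <= b ->
  (forall x, a <= x <= b -> is_derive f x (df x)) ->
  (forall x, a <= x <= b -> 0 <= df x) -> f a <= f b.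
Proof. intros Hab Hd Hp.
  destruct (MVT_gen f a b df) as [c [Hc Heq]].
  - intros x Hx. rewrite Rmin_left, Rmax_right in Hx by lra. apply Hd; lra.
  - intros x Hx. rewrite Rmin_left, Rmax_right in Hx by lra. eapply cont_of_der, Hd; lra.
  - rewrite Rmin_left, Rmax_right in Hc by lra. specialize (Hp c Hc). nra. Qed.

Lemma Series_nonneg a : (forall n, 0 <= a n) -> ex_series a -> 0 <= Series a.
Proof. intros H He. assert (Series (fun n => 0 * a n) <= Series a).
  { apply Series_le; auto. intros n. rewrite Rmult_0_l. split; [lra|auto]. }
  rewrite Series_scal_l, Rmult_0_l in H0. exact H0. Qed.

Lemma ex_pseries_R a x : ex_pseries a x -> ex_series (fun k => a k * x ^ k).
Proof. apply ex_series_ext. intros n. rewrite pow_n_pow. unfold scal; simpl. unfold mult; simpl. ring. Qed.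

Lemma Sb_ge mu z : -1 < mu -> cf mu 0 <= Sb mu z.
Proof. intros H. unfold Sb. set (q := (z/2)^2).
  assert (Hq : 0 <= q) by (unfold q; apply pow2_ge_0).
  rewrite PSeries_decr_1 by (apply Sb_ex; auto).
  assert (0 <= PSeries (PS_decr_1 (cf mu)) q).
  { apply Series_nonneg. intros n. unfold PS_decr_1. apply Rmult_le_pos. apply Rlt_le, cf_pos; auto. apply pow_le; auto.
    apply ex_pseries_R. apply (ex_pseries_decr_1 (cf mu) q). destruct (Req_dec q 0) as [Hq0|Hq0]. left; exact Hq0.
    right. exists (/ q). unfold mult, one; simpl. field. exact Hq0. apply Sb_ex; auto. }
  nra. Qed.

Lemma Sb_pos mu z : -1 < mu -> 0 < Sb mu z.
Proof. intros H. eapply Rlt_le_trans; [apply cf_pos, H|apply Sb_ge, H]. Qed.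

Lemma Sb_mono mu a b : -1 < mu -> 0 <= a -> a <= b -> Sb mu a <= Sb mu b.
Proof. intros H Ha Hab. apply (incr_of_der (Sb mu) (fun z => z / 2 * Sb (mu + 1) z)); auto.
  - intros x _. apply Sb_der; auto.
  - intros x Hx. apply Rmult_le_pos. lra. apply Rlt_le, Sb_pos. lra. Qed.


Definition Pt mu z := z * Sb mu z ^ 2 - z ^ 3 / 4 * Sb (mu+1) z ^ 2 - (mu + 1/2) * z * Sb mu z * Sb (mu+1) z.

Lemma Q_der mu z : 0 < mu -> 0 < z ->
  is_derive (fun z => exp (2 * mu * ln z) * Pt mu z) z ((mu + 1/2) * exp (2 * mu * ln z) * Sb mu z * Sb (mu+1) z).
Proof. intros Hm Hz. unfold Pt.
  assert (HA := Sb_der mu z ltac:(lra)). assert (HB := Sb_der (mu+1) z ltac:(lra)).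
  assert (Hr := Sb_rec mu z ltac:(lra)).
  replace (mu + 1 + 1) with (mu + 2) in HB by ring.
  assert (HC : Sb (mu+2) z = (Sb mu z - (mu+1) * Sb (mu+1) z) / (z/2)^2) by (rewrite Hr; field; lra).
  rewrite HC in HB.
  auto_derive.
  - repeat split; try lra; eexists; eauto.
  - replace (Derive (fun x => Sb mu x) z) with (z/2 * Sb (mu+1) z) by (symmetry; apply is_derive_unique; exact HA).
    replace (Derive (fun x => Sb (mu+1) x) z) with (z / 2 * ((Sb mu z - (mu + 1) * Sb (mu + 1) z) / (z / 2) ^ 2)) by (symmetry; apply is_derive_unique; exact HB).
    field. lra.
Qed.

Lemma Pt_nonneg mu z : 0 < mu -> 0 < z -> 0 <= Pt mu z.
Proof. intros Hm Hz.
  set (A1 := Sb mu 1). set (B1 := Sb (mu+1) 1).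
  assert (HA1 : 0 < A1) by (apply Sb_pos; lra). assert (HB1 : 0 < B1) by (apply Sb_pos; lra).
  set (K := B1 ^ 2 / 4 + (mu + 1/2) * A1 * B1).
  assert (HK : 0 < K) by (unfold K; assert (0 < (mu+1/2)*A1*B1) by (repeat apply Rmult_lt_0_compat; lra); assert (0 < B1^2) by (apply pow_lt; lra); lra).
  set (Q := fun z => exp (2 * mu * ln z) * Pt mu z).
  assert (Hlow : forall e, 0 < e -> e <= 1 -> - K * e <= Q e).
  { intros e He He1. unfold Q, Pt.
    assert (HA : 0 < Sb mu e <= A1) by (split; [apply Sb_pos; lra | apply Sb_mono; lra]).
    assert (HB : 0 < Sb (mu+1) e <= B1) by (split; [apply Sb_pos; lra | apply Sb_mono; lra]).
    assert (Hex : 0 < exp (2 * mu * ln e) <= 1).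
    { split. apply exp_pos. rewrite <- exp_0. apply exp_mono.
      assert (ln e <= 0) by (rewrite <- ln_1; apply ln_le; lra). nra. }
    set (A := Sb mu e) in *. set (B := Sb (mu+1) e) in *. set (E := exp (2 * mu * ln e)) in *.
    assert (H1 : e ^ 3 / 4 * B ^ 2 <= e * (B1 ^ 2 / 4)).
    { assert (He2 : e * e <= 1) by nra.
      assert (He3 : e ^ 3 <= e) by (simpl; rewrite Rmult_1_r; nra).
      assert (HB2 : B ^ 2 <= B1 ^ 2) by (apply pow_incr; lra).
      assert (0 <= B^2) by (apply pow_le; lra).
      assert (0 <= e^3) by (apply pow_le; lra).
      assert (e ^ 3 * B ^ 2 <= e * B1 ^ 2) by (apply Rmult_le_compat; lra).
      lra. }
    assert (H2 : (mu + 1/2) * e * A * B <= e * ((mu + 1/2) * A1 * B1)).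
    { assert (HAB : A * B <= A1 * B1) by (apply Rmult_le_compat; lra).
      assert (0 <= (mu + 1/2) * e) by (apply Rmult_le_pos; lra).
      apply Rmult_le_compat_l with (r := (mu + 1/2) * e) in HAB; [|lra]. lra. }
    assert (HP : - K * e <= e * A ^ 2 - e ^ 3 / 4 * B ^ 2 - (mu + 1 / 2) * e * A * B).
    { unfold K. assert (0 <= e * A^2) by nra. nra. }
    destruct (Rle_lt_dec 0 (e * A ^ 2 - e ^ 3 / 4 * B ^ 2 - (mu + 1 / 2) * e * A * B)).
    - assert (0 <= E * (e * A ^ 2 - e ^ 3 / 4 * B ^ 2 - (mu + 1 / 2) * e * A * B)) by nra. nra.
    - nra. }
  assert (Hmon : forall e, 0 < e -> e <= z -> Q e <= Q z).
  { intros e He Hez. apply (incr_of_der Q (fun z => (mu + 1/2) * exp (2 * mu * ln z) * Sb mu z * Sb (mu+1) z)); auto.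
    - intros x Hx. apply Q_der; lra.
    - intros x Hx. assert (0 < Sb mu x) by (apply Sb_pos; lra). assert (0 < Sb (mu+1) x) by (apply Sb_pos; lra).
      pose proof (exp_pos (2 * mu * ln x)). apply Rlt_le. repeat apply Rmult_lt_0_compat; lra. }
  assert (HQ : 0 <= Q z).
  { destruct (Rle_lt_dec 0 (Q z)) as [H|H]; auto.
    set (e := Rmin (Rmin 1 z) (- Q z / (2 * K))).
    assert (He : 0 < e). { unfold e. apply Rmin_pos. apply Rmin_pos; lra. apply Rdiv_lt_0_compat; lra. }
    assert (He1 : e <= 1) by (unfold e; eapply Rle_trans; [apply Rmin_l|apply Rmin_l]).
    assert (Hez : e <= z) by (unfold e; eapply Rle_trans; [apply Rmin_l|apply Rmin_r]).
    assert (He2 : e <= - Q z / (2 * K)) by (unfold e; apply Rmin_r).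
    specialize (Hlow e He He1). specialize (Hmon e He Hez).
    assert (K * e <= - Q z / 2). { apply Rmult_le_compat_l with (r := K) in He2; [|lra].
      replace (K * (- Q z / (2 * K))) with (- Q z / 2) in He2 by (field; lra). exact He2. }
    lra. }
  unfold Q in HQ. pose proof (exp_pos (2 * mu * ln z)).
  destruct (Rle_lt_dec 0 (Pt mu z)); auto. nra. Qed.

Lemma ratio_ineq mu z : 0 < mu -> 0 < z -> (z + mu + 1/2) * (z / 2 * Sb (mu+1) z) <= z * Sb mu z.
Proof. intros Hm Hz. pose proof (Pt_nonneg mu z Hm Hz) as HP. unfold Pt in HP.
  assert (HA : 0 < Sb mu z) by (apply Sb_pos; lra). assert (HB : 0 < Sb (mu+1) z) by (apply Sb_pos; lra).
  set (A := Sb mu z) in *. set (B := Sb (mu+1) z) in *. set (X := z / 2 * B).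
  assert (HX : 0 < X) by (unfold X; nra).
  assert (H1 : z * (A ^ 2 - X ^ 2) >= 2 * (mu + 1/2) * A * X).
  { unfold X. apply Rle_ge. replace (z * (A ^ 2 - (z / 2 * B) ^ 2)) with (z * A ^ 2 - z ^ 3 / 4 * B ^ 2) by (field).
    replace (2 * (mu + 1 / 2) * A * (z / 2 * B)) with ((mu + 1 / 2) * z * A * B) by field. lra. }
  assert (H2 : X <= A).
  { destruct (Rle_lt_dec X A); auto. assert (0 < (X - A) * (A + X)) by (apply Rmult_lt_0_compat; lra).
    assert (0 < z * (X^2 - A^2)) by (apply Rmult_lt_0_compat; lra).
    assert (0 < 2 * (mu + 1/2) * A * X) by (repeat apply Rmult_lt_0_compat; lra). lra. }
  fold X. destruct (Rle_lt_dec ((z + mu + 1/2) * X) (z * A)); auto.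
  assert (z * (A - X) < (mu + 1/2) * X) by lra.
  assert (z * (A - X) * (A + X) < (mu + 1/2) * X * (A + X)) by (apply Rmult_lt_compat_r; lra).
  assert ((mu + 1/2) * X * (X - A) <= 0). { apply Rmult_le_0_l. apply Rmult_le_pos; lra. lra. }
  lra. Qed.

Lemma decr_of_der (f df : R -> R) a b : a <= b ->
  (forall x, a <= x <= b -> is_derive f x (df x)) ->
  (forall x, a <= x <= b -> df x <= 0) -> f b <= f a.
Proof. intros Hab Hd Hp.
  assert (- f a <= - f b).
  { apply (incr_of_der (fun x => - f x) (fun x => - df x)); auto.
    - intros x Hx. apply (is_derive_opp f). auto.
    - intros x Hx. specialize (Hp x Hx). lra. }
  lra. Qed.

Lemma Sb_bound mu : 0 < mu -> exists M, 0 < M /\ forall z, 1 <= z -> Sb mu z <= M * exp z * Rpower z (- (mu + 1/2)).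
Proof. intros Hm. set (a := mu + 1/2).
  set (H := fun z => exp (- z + a * ln (z + a)) * Sb mu z).
  assert (Hd : forall z, 0 < z -> is_derive H z (exp (- z + a * ln (z + a)) * ((-1 + a / (z + a)) * Sb mu z + z / 2 * Sb (mu+1) z))).
  { intros z Hz. unfold H. assert (HA := Sb_der mu z ltac:(lra)).
    auto_derive. split. unfold a; lra. split. eexists; eauto. auto.
    replace (Derive (fun x => Sb mu x) z) with (z/2 * Sb (mu+1) z) by (symmetry; apply is_derive_unique; exact HA).
    field. unfold a; lra. }
  exists (H 1). split. { unfold H. apply Rmult_lt_0_compat. apply exp_pos. apply Sb_pos; lra. }
  intros z Hz.
  assert (Hle : H z <= H 1).
  { apply (decr_of_der H (fun z => exp (- z + a * ln (z + a)) * ((-1 + a / (z + a)) * Sb mu z + z / 2 * Sb (mu+1) z)) 1 z Hz). intros x Hx. apply Hd; lra.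
    intros x Hx. pose proof (exp_pos (- x + a * ln (x + a))).
    pose proof (ratio_ineq mu x Hm ltac:(lra)).
    assert ((-1 + a / (x + a)) * Sb mu x + x / 2 * Sb (mu + 1) x <= 0).
    { assert (Hxa : 0 < x + a) by (unfold a; lra).
      assert (x / 2 * Sb (mu + 1) x <= x * Sb mu x / (x + a)).
      { apply (Rmult_le_reg_l (x + a)); auto. replace ((x + a) * (x * Sb mu x / (x + a))) with (x * Sb mu x) by (field; lra).
        unfold a. lra. }
      replace ((-1 + a / (x + a)) * Sb mu x) with (- (x * Sb mu x / (x + a))) by (field; lra). lra. }
    apply Rmult_le_0_l; lra. }
  unfold H in Hle.
  assert (Hza : 0 < z + a) by (unfold a; lra).
  assert (Sb mu z <= H 1 * exp (z - a * ln (z + a))).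
  { apply (Rmult_le_reg_l (exp (- z + a * ln (z + a)))). apply exp_pos.
    replace (exp (- z + a * ln (z + a)) * (H 1 * exp (z - a * ln (z + a)))) with (H 1).
    exact Hle. rewrite Rmult_comm, Rmult_assoc, <- exp_plus. replace (z - a * ln (z + a) + (- z + a * ln (z + a))) with 0 by ring.
    rewrite exp_0; ring. }
  assert (exp (z - a * ln (z + a)) <= exp z * Rpower z (- (mu + 1/2))).
  { unfold Rpower. rewrite <- exp_plus. apply exp_mono. fold a.
    assert (ln z <= ln (z + a)) by (apply ln_le; unfold a; lra). assert (a * ln z <= a * ln (z + a)) by (apply Rmult_le_compat_l; [unfold a; lra | assumption]). lra. }
  assert (0 < H 1). { unfold H. apply Rmult_lt_0_compat. apply exp_pos. apply Sb_pos; lra. }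
  eapply Rle_trans; [eassumption|]. rewrite Rmult_assoc. apply Rmult_le_compat_l; [lra | assumption].
Qed.

Lemma Sb_diff nu z : -1 < nu -> 0 < z ->
  Rabs (z / 2 * Sb (nu + 1) z - Sb nu z) <= (nu + 2) * Sb (nu + 1) z.
Proof. intros Hn Hz.
  assert (R1 := ratio_ineq (nu + 1) z ltac:(lra) Hz).
  assert (R2 := ratio_ineq (nu + 2) z ltac:(lra) Hz).
  assert (E1 := Sb_rec nu z Hn). assert (E2 := Sb_rec (nu + 1) z ltac:(lra)).
  replace (nu + 1 + 1) with (nu + 2) in R1, E2 by ring.
  replace (nu + 1 + 2) with (nu + 3) in E2 by ring.
  replace (nu + 2 + 1) with (nu + 3) in R2 by ring.
  assert (P1 : 0 < Sb (nu+1) z) by (apply Sb_pos; lra).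
  assert (P2 : 0 < Sb (nu+2) z) by (apply Sb_pos; lra).
  assert (P3 : 0 < Sb (nu+3) z) by (apply Sb_pos; lra).
  set (w := z / 2) in *. set (S0 := Sb nu z) in *. set (S1 := Sb (nu+1) z) in *.
  set (S2 := Sb (nu+2) z) in *. set (S3 := Sb (nu+3) z) in *.
  assert (Hw : 0 < w) by (unfold w; lra).
  assert (F1 : w * S2 <= S1).
  { assert (0 <= (nu + 1 + 1/2) * (w * S2)) by (apply Rmult_le_pos; [lra| apply Rmult_le_pos; lra]).
    apply (Rmult_le_reg_l z); lra. }
  assert (F2 : w * S3 <= S2).
  { assert (0 <= (nu + 2 + 1/2) * (w * S3)) by (apply Rmult_le_pos; [lra| apply Rmult_le_pos; lra]).
    apply (Rmult_le_reg_l z); lra. }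
  assert (F3 : w ^ 2 * S2 <= w * S1) by (replace (w^2 * S2) with (w * (w * S2)) by ring; apply Rmult_le_compat_l; lra).
  assert (F4 : w * S1 - w ^ 2 * S2 <= (nu + 2) * S1).
  { assert (S1 <= (nu + 2) * S2 + w * S2).
    { rewrite E2 at 1. replace (w ^ 2 * S3) with (w * (w * S3)) by ring.
      assert (w * (w * S3) <= w * S2) by (apply Rmult_le_compat_l; lra). lra. }
    assert (w * S1 <= w * ((nu + 2) * S2 + w * S2)) by (apply Rmult_le_compat_l; lra).
    assert (w * S2 * (nu + 2) <= S1 * (nu + 2)) by (apply Rmult_le_compat_r; lra).
    lra. }
  assert (0 <= (nu+1)*S1) by (apply Rmult_le_pos; lra). rewrite E1. apply Rabs_le. split; lra.
Qed.


Lemma delta_formula nu t x y : -1 < nu -> 0 < t -> 0 < x -> 0 < y ->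
  let r := exp (- (4 * t)) in
  let k := 2 * sqrt r / (1 - r) in
  let z := k * x * y in
  delta_kernel nu t x y =
   2 * sqrt (r * x * y) / (1 - r) * exp (- (1 / 2) * ((1 + r) / (1 - r)) * (x ^ 2 + y ^ 2))
   * Rpower (z / 2) nu * x * ((1 - (1 + r) / (1 - r)) * Sb nu z + (k * y) ^ 2 / 2 * Sb (nu + 1) z).
Proof. intros Hn Ht Hx Hy r k z.
  assert (Hr : 0 < r) by apply exp_pos.
  assert (Hr1 : r < 1) by (unfold r; rewrite <- exp_0; apply exp_increasing; lra).
  assert (Hk : 0 < k) by (unfold k; apply Rdiv_lt_0_compat; [apply Rmult_lt_0_compat; [lra|apply sqrt_lt_R0; lra]|lra]).
  set (g := fun x' => 2 * sqrt (r * x' * y) / (1 - r) * exp (- (1 / 2) * ((1 + r) / (1 - r)) * (x' ^ 2 + y ^ 2))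
     * exp (nu * ln (k * x' * y / 2)) * Sb nu (k * x' * y)).
  assert (Heq : forall x', 0 < x' -> lag_kernel nu t x' y = g x').
  { intros x' Hx'. unfold lag_kernel, g. fold r. fold k. rewrite BesselI_Sb.
    unfold Rpower. ring. apply Rmult_lt_0_compat; [|lra]. apply Rmult_lt_0_compat; lra. }
  assert (HS := Sb_der nu (k * x * y) Hn).
  assert (Hg : is_derive g x (2 * sqrt (r * x * y) / (1 - r) * exp (- (1 / 2) * ((1 + r) / (1 - r)) * (x ^ 2 + y ^ 2))
   * exp (nu * ln (k * x * y / 2)) * x * ((1 - (1 + r) / (1 - r)) * Sb nu (k * x * y) + (k * y) ^ 2 / 2 * Sb (nu + 1) (k * x * y))
   + (1 / x) * (nu + 1 / 2) * g x - x * g x)).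
  { unfold g. auto_derive.
    - repeat split.
      + apply Rmult_lt_0_compat; [|lra]. apply Rmult_lt_0_compat; lra.
      + apply Rmult_lt_0_compat; [|lra]. apply Rmult_lt_0_compat; [|lra]. apply Rmult_lt_0_compat; lra.
      + eexists; exact HS.
    - replace (Derive (fun x0 => Sb nu x0) (k * x * y)) with (k * x * y / 2 * Sb (nu + 1) (k * x * y)) by (symmetry; apply is_derive_unique; exact HS).
      replace (x * (x * 1) + y * (y * 1)) with (x ^ 2 + y ^ 2) by ring.
      replace (k * x * y * / 2) with (k * x * y / 2) by (unfold Rdiv; ring).
      assert (HQ : 0 < sqrt (r * x * y)) by (apply sqrt_lt_R0; apply Rmult_lt_0_compat; [|lra]; apply Rmult_lt_0_compat; lra).
      replace (r * 1 * y) with (sqrt (r * x * y) * sqrt (r * x * y) / x) by (rewrite sqrt_sqrt; [field; lra| apply Rlt_le; apply Rmult_lt_0_compat; [|lra]; apply Rmult_lt_0_compat; lra]).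
      field. repeat split; lra. }
  assert (HL : is_derive (fun x' => lag_kernel nu t x' y) x (2 * sqrt (r * x * y) / (1 - r) *
       exp (- (1 / 2) * ((1 + r) / (1 - r)) * (x ^ 2 + y ^ 2)) *
       exp (nu * ln (k * x * y / 2)) * x *
       ((1 - (1 + r) / (1 - r)) * Sb nu (k * x * y) +
        (k * y) ^ 2 / 2 * Sb (nu + 1) (k * x * y)) +
       1 / x * (nu + 1 / 2) * g x - x * g x)).
  { apply (is_derive_ext_loc g). exists (mkposreal x Hx). intros x' Hx'.
    change (Rabs (x' - x) < x) in Hx'. apply Rabs_lt_between in Hx'. symmetry. apply Heq. lra. exact Hg. }
  unfold delta_kernel. erewrite (is_derive_unique (fun x' : R => lag_kernel nu t x' y) x _ HL). rewrite (Heq x Hx).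
  unfold z, Rpower. ring.
Qed.


Lemma pow_gauss p a : 0 <= p -> 0 < a -> p * ln a - a ^ 2 / 8 <= 2 * p ^ 2.
Proof. intros Hp Ha. pose proof (ln_le_sub1 a Ha).
  assert (p * ln a <= p * a) by (apply Rmult_le_compat_l; lra).
  pose proof (pow2_ge_0 (a / 2 - 2 * p)). nra. Qed.

Lemma lin_gauss a : 0 <= a -> a <= 2 * exp (a ^ 2 / 8).
Proof. intros Ha. pose proof (exp_ineq1_le (a ^ 2 / 8)). pose proof (pow2_ge_0 (a / 2 - 1)). nra. Qed.

Lemma lin_gauss1 a : 0 <= a -> a * exp (- (a ^ 2 / 8)) <= 2.
Proof. intros Ha. pose proof (lin_gauss a Ha). pose proof (exp_pos (- (a ^ 2 / 8))).
  assert (a * exp (- (a ^ 2 / 8)) <= 2 * exp (a ^ 2 / 8) * exp (- (a ^ 2 / 8))) by (apply Rmult_le_compat_r; lra).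
  rewrite Rmult_assoc, <- exp_plus in H1. replace (a ^ 2 / 8 + - (a ^ 2 / 8)) with 0 in H1 by ring.
  rewrite exp_0 in H1. lra. Qed.

Lemma lin_gauss2 a : 0 <= a -> a * exp (- (a ^ 2 / 4)) <= 2 * exp (- (a ^ 2 / 8)).
Proof. intros Ha. replace (- (a ^ 2 / 4)) with (- (a ^ 2 / 8) + - (a ^ 2 / 8)) by field.
  rewrite exp_plus, <- Rmult_assoc. apply Rmult_le_compat_r. apply Rlt_le, exp_pos. apply lin_gauss1; auto. Qed.

Lemma quad_ln a : ln (1 + a ^ 2) <= a ^ 2 / 8 + ln 8.
Proof. pose proof (exp_ineq1_le (a ^ 2 / 8)). pose proof (pow2_ge_0 a).
  rewrite <- (ln_exp (a^2/8)). rewrite <- ln_mult by (try apply exp_pos; lra).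
  apply ln_le. nra. nra. Qed.

Definition Lp nu s u v := ln 2 + (nu+1) * ln s + (nu + 3/2) * ln u + (nu + 1/2) * ln v.
Definition Fc nu s u v := exp (Lp nu s u v) * exp (- ((1 + s^2)/2 * (u^2+v^2))) *
  Rabs (v^2 * Sb (nu+1) (2*s*u*v) - Sb nu (2*s*u*v)).

Lemma gamma_nu_ge0 nu : 0 <= gamma_nu nu.
Proof. unfold gamma_nu. destruct Rlt_dec; lra. Qed.

Lemma ln_pos_ge a : 1 <= a -> 0 <= ln a.
Proof. intros. rewrite <- ln_1. apply ln_le; lra. Qed.

Lemma v_term nu v : -1 < nu -> 0 < v ->
  (nu + 1/2) * ln v - v ^ 2 / 8 <= 2 * (nu + 1/2) ^ 2 + gamma_nu nu * ln (1 + / v).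
Proof. intros Hn Hv. assert (Hiv : 0 < / v) by (apply Rinv_0_lt_compat; lra).
  assert (Hl : 0 <= ln (1 + / v)) by (apply ln_pos_ge; lra).
  unfold gamma_nu. destruct Rlt_dec as [H|H].
  - assert (ln v = - ln (/ v)) by (rewrite ln_Rinv by lra; ring).
    assert (ln (/ v) <= ln (1 + / v)) by (apply ln_le; lra).
    assert ((- (1/2) - nu) * ln (/ v) <= (- (1/2) - nu) * ln (1 + / v)) by (apply Rmult_le_compat_l; lra).
    pose proof (pow2_ge_0 v). pose proof (pow2_ge_0 (nu + 1/2)). rewrite H0. nra.
  - pose proof (pow_gauss (nu + 1/2) v ltac:(lra) Hv). lra. Qed.

Lemma core_small nu : -1 < nu -> exists K, 0 < K /\ forall s u v, 0 < s -> s < 1 -> 0 < u -> 0 < v ->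
  2 * s * u * v <= 1 ->
  Fc nu s u v <= K * exp (- ln s / 2 - (u - v) ^ 2 / 16 + gamma_nu nu * ln (1 + / v)).
Proof. intros Hn. set (M1 := Sb (nu+1) 1 + Sb nu 1).
  assert (HM1 : 0 < M1) by (unfold M1; pose proof (Sb_pos (nu+1) 1 ltac:(lra)); pose proof (Sb_pos nu 1 Hn); lra).
  exists (M1 * exp (ln 2 + 2 * (nu + 3/2)^2 + 2 * (nu + 1/2)^2 + ln 8)). split.
  { apply Rmult_lt_0_compat; auto. apply exp_pos. }
  intros s u v Hs Hs1 Hu Hv Hz. set (z := 2 * s * u * v) in *.
  assert (Hz0 : 0 <= z) by (unfold z; repeat apply Rmult_le_pos; lra).
  assert (HS1 : 0 < Sb (nu+1) z <= Sb (nu+1) 1) by (split; [apply Sb_pos; lra| apply Sb_mono; lra]).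
  assert (HS0 : 0 < Sb nu z <= Sb nu 1) by (split; [apply Sb_pos; lra| apply Sb_mono; lra]).
  assert (Hab : Rabs (v^2 * Sb (nu+1) z - Sb nu z) <= M1 * exp (ln (1 + v^2))).
  { rewrite exp_ln by (pose proof (pow2_ge_0 v); lra). pose proof (pow2_ge_0 v).
    assert (v^2 * Sb (nu+1) z <= v^2 * M1) by (apply Rmult_le_compat_l; unfold M1; lra).
    assert (0 <= v^2 * Sb (nu+1) z) by (apply Rmult_le_pos; lra).
    apply Rabs_le. unfold M1 in *. split; nra. }
  unfold Fc. fold z.
  apply Rle_trans with (exp (Lp nu s u v) * exp (- ((1 + s ^ 2) / 2 * (u ^ 2 + v ^ 2))) * (M1 * exp (ln (1 + v ^ 2)))).
  { apply Rmult_le_compat_l; auto. apply Rlt_le, Rmult_lt_0_compat; apply exp_pos. }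
  replace (exp (Lp nu s u v) * exp (- ((1 + s ^ 2) / 2 * (u ^ 2 + v ^ 2))) * (M1 * exp (ln (1 + v ^ 2))))
    with (M1 * exp (Lp nu s u v + - ((1 + s ^ 2) / 2 * (u ^ 2 + v ^ 2)) + ln (1 + v ^ 2))) by (rewrite !exp_plus; ring).
  rewrite Rmult_assoc, <- exp_plus. apply Rmult_le_compat_l; [lra|]. apply exp_mono.
  unfold Lp.
  assert (Hls : ln s < 0) by (rewrite <- ln_1; apply ln_increasing; lra).
  assert (H1 : (nu + 3/2) * ln s <= 0) by (apply Rmult_le_0_l; lra).
  pose proof (pow_gauss (nu + 3/2) u ltac:(lra) Hu) as H2.
  pose proof (v_term nu v Hn Hv) as H3.
  pose proof (quad_ln v) as H4.
  assert (H5 : s^2 * (u^2 + v^2) >= 0) by (apply Rle_ge; apply Rmult_le_pos; [apply pow2_ge_0| pose proof (pow2_ge_0 u); pose proof (pow2_ge_0 v); lra]).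
  assert (H6 : (u - v)^2 <= 2 * (u^2 + v^2)) by (pose proof (pow2_ge_0 (u + v)); nra).
  pose proof (pow2_ge_0 u). pose proof (pow2_ge_0 (nu + 3/2)). pose proof (pow2_ge_0 (nu + 1/2)).
  pose proof (pow2_ge_0 v). lra.
Qed.

Lemma W_bound nu s u v : -1 < nu -> 0 < s -> s < 1 -> 0 < u -> 0 < v -> 1 <= 2 * s * u * v ->
  (Rabs (v - s * u) + (nu + 2) / v) * exp (- ((1 + s) ^ 2 * (u - v) ^ 2 / 4 + (1 - s) ^ 2 * (u + v) ^ 2 / 4))
  <= (2 * (1 + 4 * (nu + 2)) + 2 + 2 * (nu + 2)) * exp (- ((u - v) ^ 2 / 8)).
Proof. intros Hn Hs Hs1 Hu Hv Hz.
  set (a := Rabs (u - v)). set (b := (1 - s) * (u + v)).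
  assert (Ha : 0 <= a) by apply Rabs_pos. assert (Hb : 0 <= b) by (unfold b; apply Rmult_le_pos; lra).
  assert (Ha2 : a ^ 2 = (u - v) ^ 2) by (unfold a; rewrite <- Rabs_sqr_compat || idtac; simpl; rewrite !Rmult_1_r; rewrite <- Rabs_mult; rewrite Rabs_right; [ring| apply Rle_ge; apply Rle_0_sqr]).
  assert (Hb2 : b ^ 2 = (1 - s) ^ 2 * (u + v) ^ 2) by (unfold b; ring).
  assert (E1 : exp (- ((1 + s) ^ 2 * (u - v) ^ 2 / 4 + (1 - s) ^ 2 * (u + v) ^ 2 / 4)) <= exp (- (a ^ 2 / 4)) * exp (- (b ^ 2 / 4))).
  { rewrite <- exp_plus. apply exp_mono. rewrite Ha2, Hb2.
    assert ((u - v) ^ 2 <= (1 + s) ^ 2 * (u - v) ^ 2). { pose proof (pow2_ge_0 (u - v)).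
      assert (1 <= (1 + s) ^ 2) by nra. nra. } lra. }
  assert (Hvs : Rabs (v - s * u) <= a + b).
  { unfold a, b. replace (v - s * u) with (- (u - v) + (1 - s) * u) by ring.
    eapply Rle_trans; [apply Rabs_triang|]. rewrite Rabs_Ropp. apply Rplus_le_compat_l.
    rewrite Rabs_right by (apply Rle_ge, Rmult_le_pos; lra). apply Rmult_le_compat_l; lra. }
  assert (Hiv : / v <= 2 + 4 * a).
  { destruct (Rle_lt_dec (u / 2) v) as [Hc|Hc].
    - assert (u * v >= 1 / 2). { apply Rle_ge. assert (2 * s * u * v <= 2 * u * v).
        { assert (0 <= (1 - s) * (2 * u * v)) by (apply Rmult_le_pos; [lra| nra]). nra. } lra. }
      assert (v ^ 2 >= 1/4) by nra.
      assert (v >= 1/2) by nra.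
      assert (/ v <= 2). { replace 2 with (/ (1/2)) by field. apply Rinv_le_contravar; lra. }
      lra.
    - assert (/ v <= 2 * s * u). { apply (Rmult_le_reg_r v); auto. rewrite Rinv_l by lra. lra. }
      assert (u - v >= u / 2) by lra. unfold a. rewrite Rabs_right by lra.
      assert (2 * s * u <= 2 * u) by nra. lra. }
  assert (Hea : exp (- (a ^ 2 / 4)) <= exp (- (a ^ 2 / 8))) by (apply exp_mono; pose proof (pow2_ge_0 a); lra).
  assert (Heb : exp (- (b ^ 2 / 4)) <= 1) by (rewrite <- exp_0; apply exp_mono; pose proof (pow2_ge_0 b); lra).
  pose proof (lin_gauss2 a Ha) as La. pose proof (lin_gauss2 b Hb) as Lb.
  assert (Lb' : b * exp (- (b ^ 2 / 4)) <= 2).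
  { eapply Rle_trans; [exact Lb|]. assert (exp (- (b ^ 2 / 8)) <= 1) by (rewrite <- exp_0; apply exp_mono; pose proof (pow2_ge_0 b); lra). lra. }
  pose proof (exp_pos (- (a ^ 2 / 4))). pose proof (exp_pos (- (b ^ 2 / 4))). pose proof (exp_pos (- (a ^ 2 / 8))).
  set (EA := exp (- (a ^ 2 / 4))) in *. set (EB := exp (- (b ^ 2 / 4))) in *. set (EA8 := exp (- (a ^ 2 / 8))) in *.
  rewrite <- Ha2. fold EA8.
  apply Rle_trans with ((a + b + (nu + 2) * (2 + 4 * a)) * (EA * EB)).
  { apply Rmult_le_compat. 
    - apply Rplus_le_le_0_compat. apply Rabs_pos. apply Rdiv_le_0_compat; lra.
    - apply Rlt_le, exp_pos.
    - unfold Rdiv. assert ((nu + 2) * / v <= (nu + 2) * (2 + 4 * a)) by (apply Rmult_le_compat_l; lra). lra.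
    - rewrite <- Ha2 in E1. exact E1. }
  assert (T1 : a * (EA * EB) <= 2 * EA8). { replace (a * (EA * EB)) with ((a * EA) * EB) by ring.
    assert (0 <= a * EA) by (apply Rmult_le_pos; lra). nra. }
  assert (T2 : b * (EA * EB) <= 2 * EA8). { replace (b * (EA * EB)) with ((b * EB) * EA) by ring.
    assert (0 <= b * EB) by (apply Rmult_le_pos; lra). nra. }
  assert (T3 : EA * EB <= EA8) by nra.
  assert (0 <= nu + 2) by lra.
  assert ((nu + 2) * (2 + 4 * a) * (EA * EB) <= (nu + 2) * 2 * EA8 + (nu + 2) * 4 * (2 * EA8)).
  { replace ((nu + 2) * (2 + 4 * a) * (EA * EB)) with ((nu + 2) * 2 * (EA * EB) + (nu + 2) * 4 * (a * (EA * EB))) by ring.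
    apply Rplus_le_compat; apply Rmult_le_compat_l; nra. }
  nra.
Qed.

Lemma core_large nu : -1 < nu -> exists K, 0 < K /\ forall s u v, 0 < s -> s < 1 -> 0 < u -> 0 < v ->
  1 <= 2 * s * u * v ->
  Fc nu s u v <= K * exp (- ln s / 2 - (u - v) ^ 2 / 16 + gamma_nu nu * ln (1 + / v)).
Proof. intros Hn. destruct (Sb_bound (nu + 1) ltac:(lra)) as [M2 [HM2 HB]].
  set (K3 := 2 * (1 + 4 * (nu + 2)) + 2 + 2 * (nu + 2)).
  assert (HK3 : 0 < K3) by (unfold K3; lra).
  exists (M2 * exp (- (nu + 1/2) * ln 2) * K3). split.
  { repeat apply Rmult_lt_0_compat; auto. apply exp_pos. }
  intros s u v Hs Hs1 Hu Hv Hz. set (z := 2 * s * u * v) in *.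
  assert (Hz0 : 0 < z) by lra.
  assert (HS1 : 0 < Sb (nu+1) z) by (apply Sb_pos; lra).
  assert (Hd := Sb_diff nu z Hn Hz0).
  assert (HB1 := HB z Hz).
  assert (Hab : Rabs (v^2 * Sb (nu+1) z - Sb nu z) <= (Rabs (v^2 - z/2) + (nu + 2)) * Sb (nu+1) z).
  { replace (v^2 * Sb (nu+1) z - Sb nu z) with ((v^2 - z/2) * Sb (nu+1) z + (z / 2 * Sb (nu + 1) z - Sb nu z)) by ring.
    eapply Rle_trans; [apply Rabs_triang|]. rewrite Rabs_mult, (Rabs_right (Sb (nu+1) z)) by lra. lra. }
  assert (Hab2 : Rabs (v^2 * Sb (nu+1) z - Sb nu z) <= (Rabs (v^2 - z/2) + (nu + 2)) * (M2 * exp z * Rpower z (- (nu + 1 + 1/2)))).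
  { eapply Rle_trans; [exact Hab|]. apply Rmult_le_compat_l; auto. pose proof (Rabs_pos (v^2 - z/2)); lra. }
  unfold Fc. fold z.
  apply Rle_trans with (exp (Lp nu s u v) * exp (- ((1 + s ^ 2) / 2 * (u ^ 2 + v ^ 2))) * ((Rabs (v^2 - z/2) + (nu + 2)) * (M2 * exp z * Rpower z (- (nu + 1 + 1/2))))).
  { apply Rmult_le_compat_l; auto. apply Rlt_le, Rmult_lt_0_compat; apply exp_pos. }
  assert (Hlz : ln z = ln 2 + ln s + ln u + ln v).
  { unfold z. rewrite !ln_mult by (repeat apply Rmult_lt_0_compat; lra). ring. }
  assert (Hid : exp (Lp nu s u v) * exp (- ((1 + s ^ 2) / 2 * (u ^ 2 + v ^ 2))) * exp z * Rpower z (- (nu + 1 + 1/2))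
     = exp (- (nu + 1/2) * ln 2) * exp (- ln s / 2) * / v * exp (- ((1 + s) ^ 2 * (u - v) ^ 2 / 4 + (1 - s) ^ 2 * (u + v) ^ 2 / 4))).
  { unfold Rpower. rewrite Hlz. replace (/ v) with (exp (- ln v)) by (rewrite exp_Ropp, exp_ln; lra).
    rewrite <- !exp_plus. f_equal. unfold Lp, z. field. }
  assert (Hw : (Rabs (v^2 - z/2) + (nu + 2)) * / v = Rabs (v - s * u) + (nu + 2) / v).
  { unfold z. replace (v ^ 2 - 2 * s * u * v / 2) with (v * (v - s * u)) by field.
    rewrite Rabs_mult, (Rabs_right v) by lra. field. lra. }
  pose proof (W_bound nu s u v Hn Hs Hs1 Hu Hv Hz) as HW. fold K3 in HW.
  replace (exp (Lp nu s u v) * exp (- ((1 + s ^ 2) / 2 * (u ^ 2 + v ^ 2))) * ((Rabs (v^2 - z/2) + (nu + 2)) * (M2 * exp z * Rpower z (- (nu + 1 + 1/2)))))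
    with (M2 * exp (- (nu + 1/2) * ln 2) * exp (- ln s / 2) * (((Rabs (v^2 - z/2) + (nu + 2)) * / v) * exp (- ((1 + s) ^ 2 * (u - v) ^ 2 / 4 + (1 - s) ^ 2 * (u + v) ^ 2 / 4)))).
  2: { replace (exp (Lp nu s u v) * exp (- ((1 + s ^ 2) / 2 * (u ^ 2 + v ^ 2))) * ((Rabs (v^2 - z/2) + (nu + 2)) * (M2 * exp z * Rpower z (- (nu + 1 + 1/2)))))
        with (M2 * (Rabs (v^2 - z/2) + (nu + 2)) * (exp (Lp nu s u v) * exp (- ((1 + s ^ 2) / 2 * (u ^ 2 + v ^ 2))) * exp z * Rpower z (- (nu + 1 + 1/2)))) by ring.
       rewrite Hid. ring. }
  rewrite Hw.
  assert (Hg : 0 <= gamma_nu nu * ln (1 + / v)).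
  { apply Rmult_le_pos. apply gamma_nu_ge0. apply ln_pos_ge. pose proof (Rinv_0_lt_compat v Hv). lra. }
  assert (Hexp : exp (- ln s / 2) * exp (- ((u - v) ^ 2 / 8)) <= exp (- ln s / 2 - (u - v) ^ 2 / 16 + gamma_nu nu * ln (1 + / v))).
  { rewrite <- exp_plus. apply exp_mono. pose proof (pow2_ge_0 (u - v)). lra. }
  assert (0 < M2 * exp (- (nu + 1 / 2) * ln 2)) by (apply Rmult_lt_0_compat; auto; apply exp_pos).
  pose proof (exp_pos (- ln s / 2)).
  apply Rle_trans with (M2 * exp (- (nu + 1 / 2) * ln 2) * exp (- ln s / 2) * (K3 * exp (- ((u - v) ^ 2 / 8)))).
  { apply Rmult_le_compat_l; [apply Rlt_le, Rmult_lt_0_compat; auto|]. exact HW. }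
  replace (M2 * exp (- (nu + 1 / 2) * ln 2) * exp (- ln s / 2) * (K3 * exp (- ((u - v) ^ 2 / 8))))
    with (M2 * exp (- (nu + 1 / 2) * ln 2) * K3 * (exp (- ln s / 2) * exp (- ((u - v) ^ 2 / 8)))) by ring.
  apply Rmult_le_compat_l; [|exact Hexp]. apply Rlt_le, Rmult_lt_0_compat; auto.
Qed.

Lemma core nu : -1 < nu -> exists K, 0 < K /\ forall s u v, 0 < s -> s < 1 -> 0 < u -> 0 < v ->
  Fc nu s u v <= K * exp (- ln s / 2 - (u - v) ^ 2 / 16 + gamma_nu nu * ln (1 + / v)).
Proof. intros Hn. destruct (core_small nu Hn) as [K1 [HK1 H1]]. destruct (core_large nu Hn) as [K2 [HK2 H2]].
  exists (K1 + K2). split; [lra|]. intros s u v Hs Hs1 Hu Hv.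
  pose proof (exp_pos (- ln s / 2 - (u - v) ^ 2 / 16 + gamma_nu nu * ln (1 + / v))).
  destruct (Rle_lt_dec (2 * s * u * v) 1) as [Hz|Hz].
  - specialize (H1 s u v Hs Hs1 Hu Hv Hz). nra.
  - specialize (H2 s u v Hs Hs1 Hu Hv ltac:(lra)). nra.
Qed.

Lemma sqrt_exp a : 0 < a -> sqrt a = exp (ln a / 2).
Proof. intros Ha. rewrite <- Rpower_sqrt by auto. unfold Rpower. f_equal. field. Qed.

Lemma delta_abs nu t x y : -1 < nu -> 0 < t -> 0 < x -> 0 < y ->
  Rabs (delta_kernel nu t x y) = 2 * exp (- (2 * t)) ^ 2 / (1 - exp (- (2 * t)) ^ 2) *
    Fc nu (exp (- (2 * t))) (x / sqrt (1 - exp (- (2 * t)) ^ 2)) (y / sqrt (1 - exp (- (2 * t)) ^ 2)).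
Proof. intros Hn Ht Hx Hy.
  pose proof (delta_formula nu t x y Hn Ht Hx Hy) as HF. cbv zeta in HF. rewrite HF. clear HF.
  set (s := exp (- (2 * t))).
  assert (Hs : 0 < s) by apply exp_pos.
  assert (Hs1 : s < 1) by (unfold s; rewrite <- exp_0; apply exp_increasing; lra).
  assert (Hr : exp (- (4 * t)) = s ^ 2) by (unfold s; simpl; rewrite Rmult_1_r, <- exp_plus; f_equal; ring).
  rewrite Hr. assert (Hsq : sqrt (s ^ 2) = s) by (apply sqrt_pow2; lra). rewrite Hsq.
  set (d := 1 - s ^ 2).
  assert (Hd : 0 < d) by (unfold d; assert (s ^ 2 < 1) by (simpl; nra); lra).
  assert (Hsd : 0 < sqrt d) by (apply sqrt_lt_R0; auto).
  assert (Hsd2 : sqrt d * sqrt d = d) by (apply sqrt_sqrt; lra).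
  set (u := x / sqrt d). set (v := y / sqrt d).
  assert (Hu : 0 < u) by (unfold u; apply Rdiv_lt_0_compat; auto).
  assert (Hv : 0 < v) by (unfold v; apply Rdiv_lt_0_compat; auto).
  assert (Hx' : x = sqrt d * u) by (unfold u; field; lra).
  assert (Hy' : y = sqrt d * v) by (unfold v; field; lra).
  clearbody u v.
  assert (Hpq : forall a b, sqrt d * a * (sqrt d * b) = d * (a * b)) by (intros; transitivity ((sqrt d * sqrt d) * (a * b)); [ring| rewrite Hsd2; ring]).
  assert (Hsq2 : forall a, (sqrt d * a) ^ 2 = d * a ^ 2) by (intros; transitivity ((sqrt d * sqrt d) * a ^ 2); [ring| rewrite Hsd2; ring]).
  assert (Ez : 2 * s / d * x * y = 2 * s * u * v) by (rewrite Hx', Hy', Rmult_assoc, Hpq; field; lra).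
  rewrite Ez.
  assert (Hlsd : ln (sqrt d) = ln d / 2) by (rewrite sqrt_exp by lra; apply ln_exp).
  assert (Hlx : ln x = ln d / 2 + ln u) by (rewrite Hx', ln_mult, Hlsd by lra; ring).
  assert (Hly : ln y = ln d / 2 + ln v) by (rewrite Hy', ln_mult, Hlsd by lra; ring).
  assert (HP : 2 * sqrt (s ^ 2 * x * y) / d * Rpower (2 * s * u * v / 2) nu * x = exp (Lp nu s u v)).
  { rewrite sqrt_exp by (repeat apply Rmult_lt_0_compat; try apply pow_lt; lra).
    replace (2 * s * u * v / 2) with (s * u * v) by field.
    unfold Rpower. rewrite !ln_mult by (repeat apply Rmult_lt_0_compat; try apply pow_lt; lra).
    replace (ln (s ^ 2)) with (2 * ln s) by (simpl; rewrite Rmult_1_r, ln_mult by lra; ring).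
    transitivity (2 * exp ((2 * ln s + ln x + ln y) / 2 + - ln d + nu * (ln s + ln u + ln v) + ln x)).
    { rewrite !exp_plus. rewrite exp_Ropp, (exp_ln d), (exp_ln x) by lra. field. lra. }
    replace ((2 * ln s + ln x + ln y) / 2 + - ln d + nu * (ln s + ln u + ln v) + ln x) with (Lp nu s u v + - ln 2) by (unfold Lp; rewrite Hlx, Hly; field).
    rewrite exp_plus, exp_Ropp, exp_ln by lra. field. }
  assert (HE : exp (- (1/2) * ((1+s^2)/d) * (x^2+y^2)) = exp (- ((1+s^2)/2 * (u^2+v^2)))).
  { f_equal. rewrite Hx', Hy', !Hsq2. field. lra. }
  assert (HBr : forall S0 S1, (1 - (1+s^2)/d) * S0 + (2*s/d*y)^2/2 * S1 = 2 * s^2 / d * (v^2 * S1 - S0)).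
  { intros S0 S1. rewrite Hy'. replace ((2 * s / d * (sqrt d * v)) ^ 2) with (4 * s^2 / d^2 * (sqrt d * v) ^ 2) by (field; lra).
    rewrite Hsq2. unfold d. field. unfold d in Hd. lra. }
  replace (2 * sqrt (s ^ 2 * x * y) / d * exp (- (1 / 2) * ((1 + s ^ 2) / d) * (x ^ 2 + y ^ 2)) *
     Rpower (2 * s * u * v / 2) nu * x * ((1 - (1 + s ^ 2) / d) * Sb nu (2 * s * u * v) + (2 * s / d * y) ^ 2 / 2 * Sb (nu + 1) (2 * s * u * v)))
    with ((2 * sqrt (s ^ 2 * x * y) / d * Rpower (2 * s * u * v / 2) nu * x) * exp (- (1 / 2) * ((1 + s ^ 2) / d) * (x ^ 2 + y ^ 2)) *
     ((1 - (1 + s ^ 2) / d) * Sb nu (2 * s * u * v) + (2 * s / d * y) ^ 2 / 2 * Sb (nu + 1) (2 * s * u * v))) by ring.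
  rewrite HP, HE, HBr. unfold Fc.
  assert (0 < 2 * s ^ 2 / d) by (apply Rdiv_lt_0_compat; [apply Rmult_lt_0_compat; [lra| apply pow_lt; lra]| lra]).
  rewrite !Rabs_mult. rewrite (Rabs_right (exp (Lp nu s u v))) by (apply Rle_ge, Rlt_le, exp_pos).
  rewrite (Rabs_right (exp (- ((1 + s ^ 2) / 2 * (u ^ 2 + v ^ 2))))) by (apply Rle_ge, Rlt_le, exp_pos).
  rewrite (Rabs_right (2 * s ^ 2 / d)) by lra. ring.
Qed.


Lemma gamma_nu_le nu : -1 < nu -> gamma_nu nu <= 1.
Proof. intros. unfold gamma_nu. destruct Rlt_dec; lra. Qed.

Theorem proposition3p3 (nu : R) (hnu : -1 < nu) :
  exists C c : R, 0 < C /\ 0 < c /\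
    forall t x y : R, 0 < t -> 0 < x -> 0 < y ->
      Rabs (delta_kernel nu t x y)
        <= C / t * exp (- ((x - y) ^ 2 / (c * t)))
           * Rpower (1 + sqrt t / y) (gamma_nu nu).
Proof.
  destruct (core nu hnu) as [K [HK Hc]].
  exists (4 * K), 64. split; [lra|]. split; [lra|].
  intros t x y Ht Hx Hy.
  rewrite (delta_abs nu t x y hnu Ht Hx Hy).
  set (s := exp (- (2 * t))).
  assert (Hs : 0 < s) by apply exp_pos.
  assert (Hs1 : s < 1) by (unfold s; rewrite <- exp_0; apply exp_increasing; lra).
  set (d := 1 - s ^ 2).
  assert (Hs2 : s ^ 2 = exp (- (4 * t))) by (unfold s; simpl; rewrite Rmult_1_r, <- exp_plus; f_equal; ring).
  assert (Hd : 0 < d) by (unfold d; assert (s ^ 2 < 1) by (simpl; nra); lra).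
  assert (Hd4 : d <= 4 * t) by (unfold d; rewrite Hs2; pose proof (exp_ineq1_le (- (4 * t))); lra).
  assert (Hsd : 0 < sqrt d) by (apply sqrt_lt_R0; auto).
  set (u := x / sqrt d). set (v := y / sqrt d).
  assert (Hu : 0 < u) by (unfold u; apply Rdiv_lt_0_compat; auto).
  assert (Hv : 0 < v) by (unfold v; apply Rdiv_lt_0_compat; auto).
  specialize (Hc s u v Hs Hs1 Hu Hv).
  set (g := gamma_nu nu).
  assert (Hg0 : 0 <= g) by apply gamma_nu_ge0. assert (Hg1 : g <= 1) by (apply gamma_nu_le; auto).
  assert (E1 : - ln s / 2 = t) by (unfold s; rewrite ln_exp; field).
  assert (E2 : (u - v) ^ 2 = (x - y) ^ 2 / d).
  { unfold u, v. assert (sqrt d * sqrt d = d) by (apply sqrt_sqrt; lra).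
    transitivity ((x - y) ^ 2 / (sqrt d * sqrt d)). field. lra. rewrite H; reflexivity. }
  assert (E3 : - ((u - v) ^ 2 / 16) <= - ((x - y) ^ 2 / (64 * t))).
  { rewrite E2. pose proof (pow2_ge_0 (x - y)).
    assert ((x - y) ^ 2 / (64 * t) <= (x - y) ^ 2 / (16 * d)).
    { unfold Rdiv. apply Rmult_le_compat_l; auto. apply Rinv_le_contravar; lra. }
    replace ((x - y) ^ 2 / d / 16) with ((x - y) ^ 2 / (16 * d)) by (field; lra). lra. }
  assert (E4 : ln (1 + / v) <= ln 2 + ln (1 + sqrt t / y)).
  { assert (Hst : sqrt d <= 2 * sqrt t).
    { replace (2 * sqrt t) with (sqrt (4 * t)). apply sqrt_le_1_alt; lra.
      rewrite sqrt_mult by lra. replace 4 with (2 * 2) by ring. rewrite sqrt_square by lra. ring. }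
    assert (Hiv : / v = sqrt d / y) by (unfold v; field; lra).
    pose proof (sqrt_pos t).
    assert (0 <= sqrt t / y) by (apply Rdiv_le_0_compat; lra).
    rewrite <- ln_mult by lra. apply ln_le. rewrite Hiv. pose proof (Rinv_0_lt_compat v Hv). rewrite Hiv in H1. lra.
    rewrite Hiv. assert (sqrt d / y <= 2 * sqrt t / y) by (unfold Rdiv; apply Rmult_le_compat_r; [apply Rlt_le, Rinv_0_lt_compat; lra| lra]).
    assert (2 * sqrt t / y = 2 * (sqrt t / y)) by (field; lra). lra. }
  assert (E5 : g * ln (1 + / v) <= ln 2 + g * ln (1 + sqrt t / y)).
  { assert (0 <= ln (1 + sqrt t / y)) by (apply ln_pos_ge; pose proof (sqrt_pos t); assert (0 <= sqrt t / y) by (apply Rdiv_le_0_compat; lra); lra).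
    assert (0 < ln 2) by (rewrite <- ln_1; apply ln_increasing; lra).
    assert (g * ln (1 + / v) <= g * (ln 2 + ln (1 + sqrt t / y))) by (apply Rmult_le_compat_l; auto).
    assert (g * ln 2 <= ln 2) by nra. nra. }
  assert (Hexp : exp (- ln s / 2 - (u - v) ^ 2 / 16 + g * ln (1 + / v)) <= 2 * exp t * exp (- ((x - y) ^ 2 / (64 * t))) * Rpower (1 + sqrt t / y) g).
  { unfold Rpower. assert (Hl2 : exp (ln 2) = 2) by (apply exp_ln; lra).
    apply Rle_trans with (exp (ln 2 + t + - ((x - y) ^ 2 / (64 * t)) + g * ln (1 + sqrt t / y))).
    - apply exp_mono. lra.
    - right. rewrite !exp_plus, Hl2. reflexivity. }
  assert (Ht2 : 2 * s ^ 2 / d * exp t <= 2 / t).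
  { rewrite Hs2. unfold d. rewrite Hs2.
    assert (A1 : exp (- (4 * t)) * exp t = exp (- (3 * t))) by (rewrite <- exp_plus; f_equal; ring).
    assert (A2 : exp (- (3 * t)) * (1 + 3 * t) <= 1).
    { pose proof (exp_ineq1_le (3 * t)). replace 1 with (exp (- (3 * t)) * exp (3 * t)) at 2 by (rewrite <- exp_plus; replace (- (3 * t) + 3 * t) with 0 by ring; apply exp_0).
      apply Rmult_le_compat_l; [apply Rlt_le, exp_pos| lra]. }
    assert (A3 : exp (- (4 * t)) * (1 + 4 * t) <= 1).
    { pose proof (exp_ineq1_le (4 * t)). replace 1 with (exp (- (4 * t)) * exp (4 * t)) at 2 by (rewrite <- exp_plus; replace (- (4 * t) + 4 * t) with 0 by ring; apply exp_0).
      apply Rmult_le_compat_l; [apply Rlt_le, exp_pos| lra]. }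
    assert (Hd' : 0 < 1 - exp (- (4 * t))) by (rewrite <- Hs2; exact Hd).
    apply (Rmult_le_reg_r (t * (1 - exp (- (4 * t))))). apply Rmult_lt_0_compat; lra.
    replace (2 * exp (- (4 * t)) / (1 - exp (- (4 * t))) * exp t * (t * (1 - exp (- (4 * t))))) with (2 * t * (exp (- (4 * t)) * exp t)) by (field; lra).
    replace (2 / t * (t * (1 - exp (- (4 * t))))) with (2 * (1 - exp (- (4 * t)))) by (field; lra).
    rewrite A1. pose proof (exp_pos (- (3 * t))). pose proof (exp_pos (- (4 * t))). nra. }
  assert (HF0 : 0 <= Fc nu s u v) by (unfold Fc; apply Rmult_le_pos; [apply Rlt_le, Rmult_lt_0_compat; apply exp_pos| apply Rabs_pos]).
  assert (Hpos : 0 < 2 * s ^ 2 / d) by (apply Rdiv_lt_0_compat; [apply Rmult_lt_0_compat; [lra| apply pow_lt; lra]| lra]).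
  apply Rle_trans with (2 * s ^ 2 / d * (K * (2 * exp t * exp (- ((x - y) ^ 2 / (64 * t))) * Rpower (1 + sqrt t / y) g))).
  { apply Rmult_le_compat_l; [lra|]. eapply Rle_trans; [exact Hc|]. apply Rmult_le_compat_l; [lra| exact Hexp]. }
  set (G := exp (- ((x - y) ^ 2 / (64 * t))) * Rpower (1 + sqrt t / y) g).
  assert (HG : 0 <= G) by (unfold G, Rpower; apply Rlt_le, Rmult_lt_0_compat; apply exp_pos).
  replace (2 * s ^ 2 / d * (K * (2 * exp t * exp (- ((x - y) ^ 2 / (64 * t))) * Rpower (1 + sqrt t / y) g))) with ((2 * s ^ 2 / d * exp t) * (2 * K * G)) by (unfold G; ring).
  replace (4 * K / t * exp (- ((x - y) ^ 2 / (64 * t))) * Rpower (1 + sqrt t / y) g) with ((2 / t) * (2 * K * G)) by (unfold G; field; lra).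
  apply Rmult_le_compat_r; [| exact Ht2]. nra.
Qed.
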